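(* Let $A$ be a finite set, $n\ge3$, and let $\rho\subseteq A^n$ be a strongly rich relation preserved by a WNU vector-function. Then there exist an abelian group structure $(A;+)$ on $A$ and bijections $\phi_1,\dots,\phi_n:A\to A$ such that $$\rho=\{(x_1,\dots,x_n)\in A^n:\ \phi_1(x_1)+\phi_2(x_2)+\dots+\phi_n(x_n)=0\}.$$
   Context: $\rho\subseteq A^n$ is strongly rich if for every tuple $(a_1,\dots,a_n)\in A^n$ and every $j\in\{1,\dots,n\}$ there is a unique $b\in A$ with $(a_1,\dots,a_{j-1},b,a_{j+1},\dots,a_n)\in\rho$. A WNU is an $m$-ary ($m\ge2$) operation $f$ on $A$ with $f(x,\dots,x)=x$ and $f(y,x,\dots,x)=f(x,y,x,\dots,x)=\dots=f(x,\dots,x,y)$. A WNU vector-function of arity $m$ is a tuple $(f_1,\dots,f_n)$ of $m$-ary WNUs on $A$; it preserves $\rho$ if for all $\alpha^1,\dots,\alpha^m\in\rho$ the tuple $(f_1(\alpha^1(1),\dots,\alpha^m(1)),\dots,f_n(\alpha^1(n),\dots,\alpha^m(n)))$ lies in $\rho$ (a single WNU $f$ preserving $\rho$ is the case $f_1=\dots=f_n=f$). *)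

(* Defs.v *)
From mathcomp Require Import all_boot.
Set Implicit Arguments. Unset Strict Implicit. Unset Printing Implicit Defensive.

Definition tup (A : finType) (n : nat) := {ffun 'I_n -> A}.

Definition upd (A : finType) n (a : tup A n) (j : 'I_n) (b : A) : tup A n :=
  [ffun i => if i == j then b else a i].

Definition strongly_rich (A : finType) n (rho : {set tup A n}) : Prop :=
  forall (a : tup A n) (j : 'I_n),
    exists! b : A, upd a j b \in rho.

Definition op_m (A : finType) (m : nat) := {ffun 'I_m -> A} -> A.

Definition one_diff (A : finType) m (x y : A) (k : 'I_m) : {ffun 'I_m -> A} :=
  [ffun i => if i == k then y else x].

Definition is_WNU (A : finType) (m : nat) (f : op_m A m) : Prop :=
  (2 <= m) /\
  (forall x : A, f [ffun _ => x] = x) /\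
  (forall (x y : A) (k l : 'I_m), f (one_diff x y k) = f (one_diff x y l)).

Definition WNU_vector (A : finType) (n m : nat) (f : 'I_n -> op_m A m) : Prop :=
  forall i, is_WNU (f i).

Definition vf_preserves (A : finType) n m (f : 'I_n -> op_m A m)
    (rho : {set tup A n}) : Prop :=
  forall alpha : 'I_m -> tup A n,
    (forall k, alpha k \in rho) ->
    [ffun i => f i [ffun k => alpha k i]] \in rho.

Definition preserved_by_some_WNU_vector (A : finType) n (rho : {set tup A n}) : Prop :=
  exists (m : nat) (f : 'I_n -> op_m A m), WNU_vector f /\ vf_preserves f rho.

Definition abelian_group (A : Type) (add : A -> A -> A) (zero : A) (opp : A -> A) : Prop :=
  (forall x y z, add x (add y z) = add (add x y) z) /\
  (forall x y, add x y = add y x) /\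
  (forall x, add zero x = x) /\
  (forall x, add (opp x) x = zero).

Definition lin_sum (A : finType) n (add : A -> A -> A) (zero : A)
    (phi : 'I_n -> A -> A) (x : tup A n) : A :=
  foldr add zero [seq phi i (x i) | i <- enum 'I_n].

(* Main.v *)
Require Import Defs.
From mathcomp Require Import all_boot.
Set Implicit Arguments. Unset Strict Implicit. Unset Printing Implicit Defensive.

Section WG.
Variables (A : finType) (m : nat) (F : op_m A m) (h : A -> A -> A) (e : A).
Variables (k0 k1 : 'I_m).
Hypotheses (k01 : k0 != k1) (hF : is_WNU F) (hr : forall u, h u e = u) (hl : forall v, h e v = v)
  (hhom : forall x y : {ffun 'I_m -> A}, F [ffun k => h (x k) (y k)] = h (F x) (F y)).

Definition wphi a := F (one_diff e a k0).
Definition tw a b : {ffun 'I_m -> A} :=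
  [ffun k => if k == k0 then a else if k == k1 then b else e].

Lemma Fconst x : F [ffun _ => x] = x.
Proof. by case: hF => _ [H _]; apply: H. Qed.

Lemma phi_any k a : F (one_diff e a k) = wphi a.
Proof. by case: hF => _ [_ H]; apply: H. Qed.

Lemma phi_e : wphi e = e.
Proof.
rewrite /wphi -[RHS](Fconst e); congr F; apply/ffunP=> k; rewrite !ffunE; by case: ifP.
Qed.

Lemma F_tw a b : F (tw a b) = h (wphi a) (wphi b).
Proof.
rewrite -(phi_any k1 b) -hhom; congr F; apply/ffunP=> k; rewrite !ffunE.
case: (eqVneq k k0) => [->|H0]; first by rewrite ?eqxx (negbTE k01) hr.
by rewrite hl.
Qed.

Lemma F_tw' a b : F (tw a b) = h (wphi b) (wphi a).
Proof.
rewrite -(phi_any k1 b) /wphi -hhom; congr F; apply/ffunP=> k; rewrite !ffunE.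
case: (eqVneq k k0) => [->|H0]; first by rewrite ?eqxx (negbTE k01) hl.
by rewrite hr.
Qed.

Lemma phi_list a (s : seq 'I_m) : uniq s ->
  F [ffun k => if k \in s then a else e] = iter (size s) (h (wphi a)) e.
Proof.
elim: s => [|i s IH] /=.
  by move=> _; rewrite -[RHS](Fconst e); congr F; apply/ffunP=> k; rewrite !ffunE in_nil.
case/andP=> Hi Hs; rewrite -IH // -(phi_any i a) -hhom; congr F; apply/ffunP=> k.
rewrite !ffunE in_cons; case: (eqVneq k i) => [->|Hk] /=.
  by rewrite (negbTE Hi) hr.
by rewrite hl.
Qed.

Lemma phi_iter a : a = iter m (h (wphi a)) e.
Proof.
have := phi_list a (enum_uniq 'I_m); rewrite size_enum_ord => <-.
rewrite -[LHS](Fconst a); congr F; apply/ffunP=> k; by rewrite !ffunE mem_enum.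
Qed.

Lemma phi_inj : injective wphi.
Proof. by move=> a b H; rewrite (phi_iter a) (phi_iter b) H. Qed.

Lemma phi_surj y : exists a, wphi a = y.
Proof. have [g _ gK] := injF_bij phi_inj; by exists (g y). Qed.

Lemma hC : commutative h.
Proof.
move=> u v; have [a <-] := phi_surj u; have [b <-] := phi_surj v.
by rewrite -F_tw F_tw'.
Qed.

Lemma phi_h a c : wphi (h a c) = h (wphi a) (wphi c).
Proof.
rewrite /wphi -hhom; congr F; apply/ffunP=> k; rewrite !ffunE.
by case: ifP => _ //; rewrite hr.
Qed.

Lemma hA : associative h.
Proof.
move=> u v w; have [a <-] := phi_surj u; have [c <-] := phi_surj v; have [d <-] := phi_surj w.
have E1 : tw (h a c) (h e d) = [ffun k => h (tw a e k) (tw c d k)].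
  apply/ffunP=> k; rewrite !ffunE; case: ifP => _ //; case: ifP => _ //; by rewrite hr.
have := congr1 F E1; rewrite hhom !F_tw phi_h hl phi_e hr => ->.
by [].
Qed.
End WG.

Section Main.
Variables (A : finType) (n m : nat) (rho : {set tup A n}) (f : 'I_n -> op_m A m).
Hypotheses (hrich : strongly_rich rho) (hW : WNU_vector f) (hP : vf_preserves f rho).
Variables (z i1 i2 : 'I_n) (k0 k1 : 'I_m) (c : tup A n).
Hypotheses (z1 : i1 != z) (z2 : i2 != z) (i12 : i1 != i2) (k01 : k0 != k1).

Lemma uniq_at (a : tup A n) j b b' : upd a j b \in rho -> upd a j b' \in rho -> b = b'.
Proof. case: (hrich a j) => b0 [_ H] H1 H2. by rewrite -(H _ H1) -(H _ H2). Qed.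

Lemma gex (d : tup A n) : exists b, upd d z b \in rho.
Proof. by case: (hrich d z) => b [Hb _]; exists b. Qed.

Definition g (d : tup A n) := xchoose (gex d).
Lemma g_spec (d : tup A n) : upd d z (g d) \in rho.
Proof. exact: (xchooseP (gex d)). Qed.

Lemma upd_id (d : tup A n) j : upd d j (d j) = d.
Proof. by apply/ffunP=> i; rewrite ffunE; case: eqP => [->|]. Qed.

Lemma upd_comm (d : tup A n) i j a b : i != j -> upd (upd d i a) j b = upd (upd d j b) i a.
Proof.
move=> Hij; apply/ffunP=> k; rewrite !ffunE.
case: (eqVneq k i) => [->|Hk]; last by [].
by rewrite (negbTE Hij).
Qed.

Lemma g_ext (d d' : tup A n) : (forall i, i != z -> d i = d' i) -> g d = g d'.
Proof.
move=> H; have E : forall b, upd d z b = upd d' z b.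
  move=> b; apply/ffunP=> i; rewrite !ffunE; case: (eqVneq i z) => // Hi; exact: H.
apply: (uniq_at (g_spec d)); rewrite E; exact: g_spec.
Qed.

Lemma in_rho x : x \in rho <-> x z = g x.
Proof.
split=> H.
  by apply: (uniq_at (a:=x) (j:=z)); [rewrite upd_id | exact: g_spec].
by have := g_spec x; rewrite -H upd_id.
Qed.

Lemma g_hom (d : 'I_m -> tup A n) :
  g [ffun i => f i [ffun k => d k i]] = f z [ffun k => g (d k)].
Proof.
pose alpha k := upd (d k) z (g (d k)).
have := hP (fun k => g_spec (d k)); move/in_rho; rewrite ffunE => H.
transitivity (g [ffun i => f i [ffun k => alpha k i]]).
  apply: g_ext => i Hi; rewrite !ffunE; congr (f i _); apply/ffunP=> k.
  by rewrite !ffunE (negbTE Hi).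
rewrite -H; congr (f z _); apply/ffunP=> k; by rewrite !ffunE eqxx.
Qed.

Lemma idem i x : f i [ffun _ => x] = x.
Proof. by case: (hW i) => _ [H _]; exact: H. Qed.

Lemma ginj (d : tup A n) i : i != z -> injective (fun t => g (upd d i t)).
Proof.
move=> Hi t t' /= H.
apply: (uniq_at (a := upd d z (g (upd d i t))) (j := i)).
  rewrite -(upd_comm _ _ _ Hi); exact: g_spec.
rewrite -(upd_comm _ _ _ Hi) H; exact: g_spec.
Qed.

Definition gam i x := g (upd c i x).
Definition e := g c.
Lemma gam_c i : gam i (c i) = e.
Proof. by rewrite /gam upd_id. Qed.
Lemma gam_inj i : i != z -> injective (gam i).
Proof. exact: ginj. Qed.

Definition del i y := odflt (c i) [pick x | gam i x == y].
Lemma gam_del i y : i != z -> gam i (del i y) = y.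
Proof.
move=> Hi; have [gi _ K2] := injF_bij (gam_inj Hi).
rewrite /del; case: pickP => [x /eqP //| H].
by have := H (gi y); rewrite K2 eqxx.
Qed.
Lemma del_gam i x : i != z -> del i (gam i x) = x.
Proof. move=> Hi; apply: (gam_inj Hi); by rewrite gam_del. Qed.
Lemma del_e i : i != z -> del i e = c i.
Proof. by move=> Hi; rewrite -(gam_c i) del_gam. Qed.

Lemma gam_hom i (x : {ffun 'I_m -> A}) : i != z ->
  gam i (f i x) = f z [ffun k => gam i (x k)].
Proof.
move=> Hi; rewrite /gam -(g_hom (fun k => upd c i (x k))); congr g.
apply/ffunP=> j; rewrite !ffunE; case: (eqVneq j i) => [->|Hj].
  by congr (f i _); apply/ffunP=> k; rewrite !ffunE eqxx.
rewrite -{1}(idem j (c j)); congr (f j _); apply/ffunP=> k; by rewrite !ffunE (negbTE Hj).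
Qed.

Lemma del_hom i (x : {ffun 'I_m -> A}) : i != z ->
  del i (f z x) = f i [ffun k => del i (x k)].
Proof.
move=> Hi; apply: (gam_inj Hi); rewrite gam_del // gam_hom //.
by congr (f z _); apply/ffunP=> k; rewrite !ffunE gam_del.
Qed.

Definition g' (u : tup A n) := g [ffun i => del i (u i)].
Definition E : tup A n := [ffun _ => e].

Lemma g'_single i u : g' (upd E i u) = if i == z then e else u.
Proof.
case: (eqVneq i z) => [->|Hi].
  rewrite /g' /e; apply: g_ext => j Hj; by rewrite !ffunE (negbTE Hj) del_e.
transitivity (gam i (del i u)); last exact: gam_del.
rewrite /g' /gam; apply: g_ext => j Hj; rewrite !ffunE.
case: (eqVneq j i) => [->|Hji] //; exact: del_e.
Qed.

Lemma upd_E j : upd E j e = E.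
Proof. by apply/ffunP=> i; rewrite !ffunE; case: ifP. Qed.

Lemma g'E : g' E = e.
Proof. by rewrite -(upd_E z) g'_single eqxx. Qed.

Lemma g'_hom (u : 'I_m -> tup A n) :
  g' [ffun i => f z [ffun k => u k i]] = f z [ffun k => g' (u k)].
Proof.
rewrite /g'; etransitivity; last exact: (g_hom (fun k => [ffun i => del i (u k i)])).
apply: g_ext => i Hi; rewrite !ffunE del_hom //; congr (f i _); apply/ffunP=> k.
by rewrite !ffunE.
Qed.

Definition h u v := g' (upd (upd E i2 v) i1 u).
Lemma hr u : h u e = u.
Proof. by rewrite /h upd_E g'_single (negbTE z1). Qed.
Lemma hl v : h e v = v.
Proof.
rewrite /h.
have -> : upd (upd E i2 v) i1 e = upd E i2 v.
  by apply/ffunP=> j; rewrite !ffunE; case: (eqVneq j i1) => [->|//]; rewrite (negbTE i12).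
by rewrite g'_single (negbTE z2).
Qed.
Lemma hhom (x y : {ffun 'I_m -> A}) :
  f z [ffun k => h (x k) (y k)] = h (f z x) (f z y).
Proof.
rewrite /h -(g'_hom (fun k => upd (upd E i2 (y k)) i1 (x k))).
congr g'; apply/ffunP=> i; rewrite !ffunE.
case: (eqVneq i i1) => [->|H1]; first by congr (f z _); apply/ffunP=> k; rewrite !ffunE eqxx.
rewrite ?ffunE; case: (eqVneq i i2) => [->|H2].
  by congr (f z _); apply/ffunP=> k; rewrite !ffunE ?eqxx eq_sym (negbTE i12).
rewrite -[RHS](idem z e); congr (f z _); apply/ffunP=> k; by rewrite !ffunE ?(negbTE H1) ?(negbTE H2).
Qed.

Lemma hinj v : injective (fun u => h u v).
Proof.
pose D := [ffun j => del j (upd E i2 v j)].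
have key : forall w, h w v = g (upd D i1 (del i1 w)).
  move=> w; rewrite /h /g'; congr g; apply/ffunP=> j; rewrite !ffunE.
  by case: (eqVneq j i1) => [->|].
move=> u u' /= H; rewrite !key in H.
have := ginj z1 H => /= H'.
by rewrite -(gam_del u z1) H' gam_del.
Qed.

Definition opp x := odflt e [pick y | h y x == e].
Lemma opp_spec x : h (opp x) x = e.
Proof.
have [gi _ K2] := injF_bij (@hinj x).
rewrite /opp; case: pickP => [y /eqP //| H].
have K := K2 e; simpl in K.
by have := H (gi e); rewrite K eqxx.
Qed.

Lemma hC' : commutative h.
Proof. exact: (hC k01 (hW z) hr hl hhom). Qed.
Lemma hA' : associative h.
Proof. exact: (hA k01 (hW z) hr hl hhom). Qed.

Definition phi := wphi (f z) e k0.
Definition psi y := odflt e [pick a | phi a == y].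
Lemma psi_spec y : phi (psi y) = y.
Proof.
rewrite /psi; case: pickP => [a /eqP //| H].
have [a Ha] := phi_surj k0 (hW z) hr hl hhom y.
by have := H a; rewrite /phi Ha eqxx.
Qed.

Lemma phi_g' (p : tup A n) : phi (g' [ffun i => psi (p i)]) = g' p.
Proof.
have := g'_hom (fun k => if k == k0 then [ffun i => psi (p i)] else E); cbv beta.
have -> : [ffun i => f z [ffun k => (if k == k0 then [ffun i => psi (p i)] else E) i]] = p.
  apply/ffunP=> i; rewrite ffunE -[RHS]psi_spec /phi /wphi; congr (f z _).
  by apply/ffunP=> k; rewrite !ffunE; case: ifP; rewrite ffunE.
move=> ->; rewrite /phi /wphi; congr (f z _).
by apply/ffunP=> k; rewrite !ffunE; case: ifP => // _; rewrite g'E.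
Qed.

Lemma g'_add (p q : tup A n) : g' [ffun i => h (p i) (q i)] = h (g' p) (g' q).
Proof.
have := g'_hom (fun k => if k == k0 then [ffun i => psi (p i)]
                         else if k == k1 then [ffun i => psi (q i)] else E); cbv beta.
have -> : [ffun i => f z [ffun k => (if k == k0 then [ffun i => psi (p i)]
            else if k == k1 then [ffun i => psi (q i)] else E) i]] = [ffun i => h (p i) (q i)].
  apply/ffunP=> i; rewrite !ffunE.
  rewrite -[p i]psi_spec -[q i]psi_spec.
  rewrite /phi -(F_tw k01 (hW z) hr hl hhom); congr (f z _).
  by apply/ffunP=> k; rewrite !ffunE; case: ifP => _; rewrite ?ffunE //; case: ifP => _; rewrite ffunE.
move=> ->.
rewrite -(phi_g' p) -(phi_g' q) /phi -(F_tw k01 (hW z) hr hl hhom); congr (f z _).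
by apply/ffunP=> k; rewrite !ffunE; case: ifP => // _; case: ifP => // _; rewrite g'E.
Qed.

Lemma g'_list (u : tup A n) (s : seq 'I_n) : uniq s ->
  g' [ffun i => if i \in s then u i else e] =
  foldr h e [seq (if i == z then e else u i) | i <- s].
Proof.
elim: s => [|i s IH] /=.
  move=> _; transitivity (g' E); last exact: g'E.
  congr g'; apply/ffunP=> j; by rewrite !ffunE in_nil.
case/andP=> Hi Hs; rewrite -IH // -g'_single; etransitivity; last exact: g'_add.
congr g'.
apply/ffunP=> j; rewrite !ffunE in_cons; case: (eqVneq j i) => [->|Hj] /=.
  by rewrite (negbTE Hi) hr.
by rewrite hl.
Qed.

Lemma g'_sum (u : tup A n) :
  g' u = foldr h e [seq (if i == z then e else u i) | i <- enum 'I_n].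
Proof.
rewrite -g'_list ?enum_uniq //; congr g'; apply/ffunP=> j; by rewrite !ffunE mem_enum.
Qed.

Definition phiF i := if i == z then opp else gam i.

Lemma lin_list (x : tup A n) s : uniq s ->
  foldr h e [seq phiF i (x i) | i <- s] =
  h (if z \in s then opp (x z) else e)
    (foldr h e [seq (if i == z then e else gam i (x i)) | i <- s]).
Proof.
elim: s => [|i s IH] /=; first by rewrite hr.
case/andP=> Hi Hs; rewrite (IH Hs) in_cons /phiF.
case: (eqVneq i z) => [Eiz|Hiz].
  subst i; rewrite (negbTE Hi) !hl ?eqxx. reflexivity.
rewrite [false || _]/orb.
by rewrite !hA' (hC' (gam i (x i))).
Qed.

Lemma opp_opp x : opp (opp x) = x.
Proof.
by rewrite -[LHS]hr -(opp_spec x) hA' opp_spec hl.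
Qed.

Lemma g_sum (x : tup A n) :
  g x = foldr h e [seq (if i == z then e else gam i (x i)) | i <- enum 'I_n].
Proof.
transitivity (g' [ffun i => gam i (x i)]).
  rewrite /g'; apply: g_ext => i Hi; by rewrite !ffunE del_gam.
rewrite g'_sum; congr (foldr h e _); apply: eq_map => i; by rewrite ffunE.
Qed.

Lemma final x : x \in rho <-> lin_sum h e phiF x = e.
Proof.
rewrite /lin_sum (lin_list x (enum_uniq 'I_n)) mem_enum -g_sum.
split=> [/in_rho ->|H]; first by rewrite opp_spec.
apply/in_rho.
rewrite -[g x]hl -(opp_spec (opp (x z))) opp_opp -hA' H hr.
by [].
Qed.

Lemma phiF_bij i : bijective (phiF i).
Proof.
rewrite /phiF; case: (eqVneq i z) => [_|Hi]; first exact: (Bijective opp_opp opp_opp).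
by exists (del i) => y; [apply: del_gam | apply: gam_del].
Qed.

Lemma group_ok : abelian_group h e opp.
Proof. split; [exact: hA' | split; [exact: hC' | split; [exact: hl | exact: opp_spec]]]. Qed.

End Main.

Theorem mainTheorem12 (A : finType) (n : nat) (hA : 0 < #|A|) (hn : 3 <= n)
    (rho : {set tup A n}) :
  strongly_rich rho ->
  preserved_by_some_WNU_vector rho ->
  exists (add : A -> A -> A) (zero : A) (opp : A -> A) (phi : 'I_n -> A -> A),
    abelian_group add zero opp /\
    (forall i, bijective (phi i)) /\
    (forall x : tup A n, x \in rho <-> lin_sum add zero phi x = zero).
Proof.
move=> hrich [m [f [hW hP]]].
have H0 : 0 < n by apply: leq_trans hn.
have H1 : 1 < n by apply: leq_trans hn.
pose z := Ordinal H0. pose i1 := Ordinal H1. pose i2 := Ordinal hn.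
have hm : 1 < m by case: (hW z).
pose k0 := Ordinal (ltnW hm). pose k1 := Ordinal hm.
case/card_gt0P: hA => o _.
pose c : tup A n := [ffun _ => o].
have z1 : i1 != z by [].
have z2 : i2 != z by [].
have i12 : i1 != i2 by [].
have k01 : k0 != k1 by [].
exists (h hrich z i1 i2 c), (e hrich z c), (opp hrich z i1 i2 c), (phiF hrich z i1 i2 c).
split; first exact: (group_ok hrich hW hP c z1 z2 i12 k01).
split; [exact: (phiF_bij hrich hW hP c z1 z2 i12 k01) | exact: (final hrich hW hP c z1 z2 i12 k01)].
Qed.
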